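(* Let $\Pi\subset\mathbb R^2$ be a convex polygon with counterclockwise extreme points $\mathbf v_1,\dots,\mathbf v_n$. For $\mathbf x\in\Pi$ let $D(\mathbf x)\in\mathbb R^{n-1}$ be the G$-$W discrepancy vector with $i$-th coordinate $q(\mathbf x,\mathbf v_i)-w(\mathbf x,\mathbf v_i)$ for $1\le i<n$, where $q$ denotes Gibbs coordinates and $w$ Wachspress coordinates. Then there is a linear subspace of $\mathbb R^{n-1}$ of dimension $n-3$ containing $D(\mathbf x)$ for every $\mathbf x\in\Pi$.
   Context: Gibbs coordinates of $\mathbf x$: the unique probability distribution $(q(\mathbf x,\mathbf v_i))_i$ with $\sum_i q(\mathbf x,\mathbf v_i)\mathbf v_i=\mathbf x$ maximizing the entropy $-\sum_i q\log q$ ($0\log0=0$). Wachspress coordinates: with $A(\mathbf p,\mathbf q,\mathbf r)=\tfrac12\det[\mathbf q-\mathbf p,\mathbf r-\mathbf p]$ and indices mod $n$, for interior $\mathbf x$ set $w_i(\mathbf x)=A(\mathbf v_{i-1},\mathbf v_i,\mathbf v_{i+1})/(A(\mathbf v_{i-1},\mathbf v_i,\mathbf x)A(\mathbf x,\mathbf v_i,\mathbf v_{i+1}))$ and $w(\mathbf x,\mathbf v_i)=w_i(\mathbf x)/\sum_jw_j(\mathbf x)$; for $\mathbf x$ on an edge $[\mathbf v_j,\mathbf v_{j+1}]$ they are the barycentric coordinates of $\mathbf x$ with respect to $\mathbf v_j,\mathbf v_{j+1}$ and $0$ elsewhere. Both systems satisfy $\sum_i c_i\mathbf v_i=\mathbf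 x$, $\sum_ic_i=1$. *)

(* Defs.v *)
From HB Require Import structures.
From mathcomp Require Import all_boot all_order all_algebra.
From mathcomp Require Import all_classical all_reals all_analysis.
Set Implicit Arguments. Unset Strict Implicit. Unset Printing Implicit Defensive.
Import Order.TTheory GRing.Theory Num.Theory.
Local Open Scope ring_scope.

Section Defs.
Variable R : realType.
Notation pt := (R * R)%type.

Definition area (p q r : pt) : R :=
  ((q.1 - p.1) * (r.2 - p.2) - (q.2 - p.2) * (r.1 - p.1)) / 2.

Definition comb n (c : 'I_n -> R) (v : 'I_n -> pt) : pt :=
  (\sum_i c i * (v i).1, \sum_i c i * (v i).2).

(* v_1..v_n are the (counterclockwise ordered) extreme points of a convex
   polygon: every triple of vertices taken in increasing index order is
   strictly positively oriented. *)
Definition ccw_convex_polygon n (v : 'I_n -> pt) : Prop :=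
  forall i j k : 'I_n, (i < j)%N -> (j < k)%N -> 0 < area (v i) (v j) (v k).

Definition is_prob n (c : 'I_n -> R) : Prop :=
  (forall i, 0 <= c i) /\ \sum_i c i = 1.

Definition in_polygon n (v : 'I_n -> pt) (x : pt) : Prop :=
  exists c, is_prob c /\ comb c v = x.

Definition xlogx (t : R) : R := if t == 0 then 0 else t * ln t.
Definition entropy n (c : 'I_n -> R) : R := - \sum_i xlogx (c i).

Definition is_gibbs n (v : 'I_n -> pt) (x : pt) (q : 'I_n -> R) : Prop :=
  [/\ is_prob q, comb q v = x &
      forall p, is_prob p -> comb p v = x -> entropy p <= entropy q].

Definition on_edge n (v : 'I_n -> pt) (j : 'I_n) (t : R) (x : pt) : Prop :=
  0 <= t <= 1 /\
  x = ((1 - t) * (v j).1 + t * (v (ordS j)).1,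
       (1 - t) * (v j).2 + t * (v (ordS j)).2).

Definition wach_weight n (v : 'I_n -> pt) (x : pt) (i : 'I_n) : R :=
  area (v (ord_pred i)) (v i) (v (ordS i)) /
  (area (v (ord_pred i)) (v i) x * area x (v i) (v (ordS i))).

Definition is_wachspress n (v : 'I_n -> pt) (x : pt) (w : 'I_n -> R) : Prop :=
  (exists j t, on_edge v j t x /\
     w = fun i => (if i == j then 1 - t else 0) + (if i == ordS j then t else 0))
  \/
  ((forall j t, ~ on_edge v j t x) /\
     w = fun i => wach_weight v x i / \sum_k wach_weight v x k).

(* G-W discrepancy vector in R^(n-1): i-th coordinate q_i - w_i, i < n-1 (0-based) *)
Definition discrepancy n (q w : 'I_n -> R) : 'rV[R]_(n.-1) :=
  \row_(i < n.-1) (q (widen_ord (leq_pred n) i) - w (widen_ord (leq_pred n) i)).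

End Defs.

(* Main.v *)
Require Import Defs.
From HB Require Import structures.
From mathcomp Require Import all_boot all_order all_algebra.
From mathcomp Require Import all_classical all_reals all_analysis.
From mathcomp Require Import ring lra zify.
Import Order.TTheory GRing.Theory Num.Theory.
Set Implicit Arguments. Unset Strict Implicit. Unset Printing Implicit Defensive.
Local Open Scope ring_scope.

Section Aux.
Variable R : realType.
Notation pt := (R * R)%type.

Lemma area_cyc (p q r : pt) : area p q r = area q r p.
Proof. rewrite /area; ring. Qed.

Lemma area_ppr (p r : pt) : area p p r = 0.
Proof. rewrite /area; ring. Qed.

Lemma area_rpr (p r : pt) : area r p r = 0.
Proof. rewrite /area; ring. Qed.

Lemma ordS_val n (i : 'I_n) : (ordS i : nat) = if i.+1 == n then 0%N else i.+1.
Proof.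
rewrite /=; case: eqP => [->|ne]; first by rewrite modnn.
by rewrite modn_small // ltn_neqAle (ltn_ord i) andbT; apply/eqP.
Qed.


Lemma cyc n (v : 'I_n -> pt) : ccw_convex_polygon v ->
  forall i k : 'I_n, k != i -> k != ordS i -> 0 < area (v k) (v i) (v (ordS i)).
Proof.
move=> hc i k hki hks.
have hki' : (k : nat) != i := hki.
have hks' : (k : nat) != ordS i := hks.
move: hks'; rewrite ordS_val; have := ltn_ord i; have := ltn_ord k.
case: (eqVneq i.+1 n) => [e|ne] hk hi hks'.
- rewrite area_cyc area_cyc; apply: hc; rewrite ?ordS_val ?e ?eqxx; lia.
- case: (ltngtP k i) => [ki|ik|e]; last by rewrite e eqxx in hki'.
  + apply: hc => //; rewrite ordS_val (negbTE ne); lia.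
  + rewrite area_cyc; apply: hc; rewrite ?ordS_val ?(negbTE ne); lia.
Qed.

Lemma sum_ind n (j : 'I_n) (a : R) (f : 'I_n -> R) :
  \sum_i (if i == j then a else 0) * f i = a * f j.
Proof.
rewrite (bigD1 j) //= eqxx big1 ?addr0 // => i /negPf ->; by rewrite mul0r.
Qed.

Lemma wach_step (p i s x : pt) : area x p i != 0 -> area x i s != 0 ->
  (area p i s / (area p i x * area x i s) * (i.1 - x.1) =
   ((i.1 - x.1) - (s.1 - x.1)) / area x i s - ((p.1 - x.1) - (i.1 - x.1)) / area x p i) /\
  (area p i s / (area p i x * area x i s) * (i.2 - x.2) =
   ((i.2 - x.2) - (s.2 - x.2)) / area x i s - ((p.2 - x.2) - (i.2 - x.2)) / area x p i).
Proof.
have -> : area p i x = area x p i by rewrite /area; ring.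
case: p => p1 p2; case: i => i1 i2; case: s => s1 s2; case: x => x1 x2.
rewrite /area /= => h1 h2.
have h1' : (p1 - x1) * (i2 - x2) - (p2 - x2) * (i1 - x1) != 0.
  by apply: contraNneq h1 => ->; rewrite mul0r.
have h2' : (i1 - x1) * (s2 - x2) - (i2 - x2) * (s1 - x1) != 0.
  by apply: contraNneq h2 => ->; rewrite mul0r.
by split; field; rewrite h1' h2'.
Qed.

Lemma ordS_neq n (i : 'I_n) : (1 < n)%N -> ordS i != i.
Proof.
move=> hn; apply/negP => /eqP e; have := ordS_val i; rewrite e.
have := ltn_ord i; case: ifP => /eqP; lia.
Qed.

Lemma ord_pred_neq n (i : 'I_n) : (1 < n)%N -> ord_pred i != i.
Proof.
move=> hn; apply/eqP => e; have := ordS_neq i hn.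
by rewrite -{1}e ord_predK eqxx.
Qed.

Lemma ord_pred_neqS n (i : 'I_n) : (2 < n)%N -> ord_pred i != ordS i.
Proof.
move=> hn; apply/eqP => e.
have : ordS (ord_pred i) = ordS (ordS i) by rewrite e.
rewrite ord_predK => e2.
move: (ordS_val i) (ordS_val (ordS i)) (ltn_ord i); rewrite -e2.
do 2 case: ifP => /eqP ?; lia.
Qed.

Lemma sum2 n (c F : 'I_n -> R) (i s : 'I_n) : s != i ->
  (forall k, k != i -> k != s -> c k = 0) ->
  \sum_k c k * F k = c i * F i + c s * F s.
Proof.
move=> hsi h0; rewrite (bigD1 i) //= (bigD1 s) //= big1 ?addr0 ?addrA //.
by move=> k /andP [hki hks]; rewrite h0 // mul0r.
Qed.

Lemma sum2c n (c : 'I_n -> R) (i s : 'I_n) : s != i ->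
  (forall k, k != i -> k != s -> c k = 0) ->
  \sum_k c k = c i + c s.
Proof.
move=> hsi h0; rewrite (bigD1 i) //= (bigD1 s) //= big1 ?addr0 ?addrA //.
by move=> k /andP [hki hks]; rewrite h0.
Qed.

Lemma area_affine n (v : 'I_n -> pt) c q r : is_prob c ->
  area (comb c v) q r = \sum_k c k * area (v k) q r.
Proof.
move=> [_ hs].
have e k : c k * area (v k) q r = c k * ((q.1 * r.2 - q.2 * r.1) / 2)
   + (c k * (v k).1) * ((q.2 - r.2) / 2) + (c k * (v k).2) * ((r.1 - q.1) / 2).
  by rewrite /area; ring.
under eq_bigr do rewrite e.
rewrite !big_split /= -!mulr_suml hs mul1r /comb /area /=; ring.
Qed.

Lemma interior_pos n (v : 'I_n -> pt) : ccw_convex_polygon v -> (2 < n)%N ->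
  forall x, in_polygon v x -> (forall j t, ~ on_edge v j t x) ->
  forall i, 0 < area x (v i) (v (ordS i)).
Proof.
move=> hc hn x [c [hp hx]] hne i; rewrite -hx area_affine //.
have hsi : ordS i != i by apply: ordS_neq; lia.
have ht k : 0 <= c k * area (v k) (v i) (v (ordS i)).
  case: (eqVneq k i) => [->|hki].
    by rewrite area_ppr mulr0.
  case: (eqVneq k (ordS i)) => [->|hks].
    by rewrite area_rpr mulr0.
  by apply: mulr_ge0; [case: hp|apply/ltW/cyc].
rewrite lt_neqAle sumr_ge0 ?andbT //; apply/negP => hz.
have h0 := psumr_eq0P (fun k _ => ht k) (esym (eqP hz)).
have hc0 k : k != i -> k != ordS i -> c k = 0.
  move=> hki hks; have := h0 k isT; move/eqP; rewrite mulf_eq0 => /orP [/eqP //|].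
  by rewrite gt_eqF // cyc.
have hs1 : c i + c (ordS i) = 1.
  by case: hp => _ <-; rewrite (sum2c hsi hc0).
apply: (hne i (c (ordS i))); split.
  case: hp => hp _; apply/andP; split => //; have := hp i; have := hp (ordS i); lra.
rewrite -hx /comb (sum2 (fun k => (v k).1) hsi hc0) (sum2 (fun k => (v k).2) hsi hc0).
by have -> : 1 - c (ordS i) = c i by lra.
Qed.

Lemma wach_props n (v : 'I_n -> pt) : ccw_convex_polygon v -> (2 < n)%N ->
  forall x, in_polygon v x -> (forall j t, ~ on_edge v j t x) ->
  (forall i, 0 < wach_weight v x i) /\
  \sum_i wach_weight v x i * ((v i).1 - x.1) = 0 /\
  \sum_i wach_weight v x i * ((v i).2 - x.2) = 0.
Proof.
move=> hc hn x hx hne.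
have hA := interior_pos hc hn hx hne.
have hA' i : 0 < area x (v (ord_pred i)) (v i).
  by have := hA (ord_pred i); rewrite ord_predK.
have hpi i : area (v (ord_pred i)) (v i) x = area x (v (ord_pred i)) (v i).
  by rewrite area_cyc area_cyc.
split.
  move=> i; rewrite /wach_weight hpi; apply: divr_gt0; last by apply: mulr_gt0.
  apply: cyc => //; [apply: ord_pred_neq | apply: ord_pred_neqS]; lia.
have reix (g : 'I_n -> R) : \sum_i g (ord_pred i) = \sum_i g i.
  by apply: esym; apply: reindex_inj; exact: ord_pred_inj.
have ws i := wach_step (lt0r_neq0 (hA' i)) (lt0r_neq0 (hA i)).
split.
  pose g i := (((v i).1 - x.1) - ((v (ordS i)).1 - x.1)) / area x (v i) (v (ordS i)).
  have e i : wach_weight v x i * ((v i).1 - x.1) = g i - g (ord_pred i).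
    by rewrite /g ord_predK /wach_weight (ws i).1.
  by under eq_bigr do rewrite e; rewrite sumrB reix subrr.
pose g i := (((v i).2 - x.2) - ((v (ordS i)).2 - x.2)) / area x (v i) (v (ordS i)).
have e i : wach_weight v x i * ((v i).2 - x.2) = g i - g (ord_pred i).
  by rewrite /g ord_predK /wach_weight (ws i).2.
by under eq_bigr do rewrite e; rewrite sumrB reix subrr.
Qed.

Lemma sum_if n (j : 'I_n) (a : R) : \sum_i (if i == j then a else 0) = a.
Proof. by rewrite (bigD1 j) //= eqxx big1 ?addr0 // => i /negPf ->. Qed.

Lemma w_props n (v : 'I_n -> pt) : ccw_convex_polygon v -> (2 < n)%N ->
  forall x w, in_polygon v x -> is_wachspress v x w ->
  [/\ \sum_i w i = 1, \sum_i w i * (v i).1 = x.1 & \sum_i w i * (v i).2 = x.2].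
Proof.
move=> hc hn x w hx [[j [t [[ht hxe] ->]]] | [hne ->]].
  split.
  - by rewrite big_split /= !sum_if subrK.
  - under eq_bigr do rewrite mulrDl.
    by rewrite big_split /= !sum_ind hxe.
  - under eq_bigr do rewrite mulrDl.
    by rewrite big_split /= !sum_ind hxe.
have [hW [h1 h2]] := wach_props hc hn hx hne.
set W := wach_weight v x in hW h1 h2 *; clearbody W.
have hS : 0 < \sum_i W i.
  have i0 : 'I_n := Ordinal (ltn_trans (isT : (0 < 2)%N) hn).
  rewrite (bigD1 i0) //=; have := hW i0.
  have : 0 <= \sum_(i | i != i0) W i by apply: sumr_ge0 => i _; apply: ltW.
  lra.
have hS0 : \sum_i W i != 0 by apply: lt0r_neq0.
have ex (f : 'I_n -> R) (a : R) : \sum_i W i * (f i - a) = 0 ->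
    \sum_i W i / (\sum_k W k) * f i = a.
  under eq_bigr do rewrite mulrBr.
  rewrite sumrB -mulr_suml => /subr0_eq e.
  under eq_bigr do rewrite mulrAC.
  by rewrite -mulr_suml e; field.
split.
- by rewrite -mulr_suml divff.
- exact: (ex (fun i => (v i).1)).
- exact: (ex (fun i => (v i).2)).
Qed.

End Aux.

Unset Implicit Arguments.

Theorem proposition5p8 (R : realType) (n : nat) (v : 'I_n -> R * R) :
  (3 <= n)%N -> ccw_convex_polygon v ->
  exists S : {vspace 'rV[R]_(n.-1)},
    \dim S = (n - 3)%N /\
    forall (x : R * R) (q w : 'I_n -> R),
      in_polygon v x -> is_gibbs v x q -> is_wachspress v x w ->
      discrepancy q w \in S.
Proof.
case: n v => [//|m] v h3 hc.
pose pk (p : R * R) (k : 'I_2) := if k == ord0 then p.1 else p.2.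
pose Mx : 'M[R]_(m, 2) :=
  \matrix_(i, k) (pk (v (widen_ord (leqnSn m) i)) k - pk (v ord_max) k).
pose f : 'Hom('rV[R]_m, 'rV[R]_2) := linfun (mulmxr Mx).
exists (lker f); split.
- have hm : (0 < m)%N by lia.
  have hm1 : (1 < m)%N by lia.
  pose i0 : 'I_m := Ordinal hm.
  pose i1 : 'I_m := Ordinal hm1.
  pose a1 := (v (widen_ord (leqnSn m) i0)).1 - (v ord_max).1.
  pose a2 := (v (widen_ord (leqnSn m) i0)).2 - (v ord_max).2.
  pose b1 := (v (widen_ord (leqnSn m) i1)).1 - (v ord_max).1.
  pose b2 := (v (widen_ord (leqnSn m) i1)).2 - (v ord_max).2.
  have hD : a1 * b2 - a2 * b1 != 0.
    have : 0 < area (v (widen_ord (leqnSn m) i0)) (v (widen_ord (leqnSn m) i1)) (v ord_max).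
      by apply: hc => /=; lia.
    rewrite -area_cyc -area_cyc area_cyc /area -/a1 -/a2 -/b1 -/b2.
    by move=> h; apply: lt0r_neq0; lra.
  have surj (y : 'rV[R]_2) : exists z, z *m Mx = y.
    pose al := (y 0 ord0 * b2 - y 0 ord_max * b1) / (a1 * b2 - a2 * b1).
    pose be := (a1 * y 0 ord_max - a2 * y 0 ord0) / (a1 * b2 - a2 * b1).
    exists (\row_j (if j == i0 then al else if j == i1 then be else 0)).
    have h10 : (i1 == i0) = false by [].
    apply/rowP => k; rewrite !mxE (bigD1 i0) //= (bigD1 i1) //= big1 ?addr0; last first.
      by move=> j /andP [h0 h1]; rewrite !mxE (negbTE h0) (negbTE h1) mul0r.
    rewrite !mxE eqxx h10 eqxx.
    have [->|->] : k = ord0 \/ k = ord_max.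
      by case: k => [[|[|//]]] hk; [left|right]; apply: val_inj.
    + rewrite /pk /= -/a1 -/b1 /al /be; field; exact: hD.
    + rewrite /pk /= -/a2 -/b2 /al /be; field; exact: hD.
  have el : limg f = fullv.
    apply/eqP; rewrite eqEsubv subvf /=; apply/subvP => y _.
    have [z <-] := surj y.
    have -> : z *m Mx = f z by rewrite lfunE.
    exact: memv_img (memvf z).
  have := limg_ker_dim f fullv; rewrite capfv el !dimvf /= !dim_matrix.
  set d := \dim (lker f); move=> h.
  have e2 : ((1 * 2)%R : nat) = 2%N by [].
  rewrite e2 (mul1r m) in h.
  lia.
- move=> x q w hx [[hqp hq1] hqc _] hw.
  have [hw1 hw2 hw3] := w_props hc h3 hx hw.
  rewrite memv_ker lfunE /=; apply/eqP/rowP => k; rewrite !mxE.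
  under eq_bigr do rewrite !mxE.
  have ew (j : 'I_m) : widen_ord (leq_pred m.+1) j = widen_ord (leqnSn m) j.
    exact: val_inj.
  under eq_bigr do rewrite ew mulrBr.
  rewrite sumrB -mulr_suml.
  have hs0 : \sum_i (q i - w i) = 0 by rewrite sumrB hq1 hw1 subrr.
  have hsk : \sum_i (q i - w i) * pk (v i) k = 0.
    under eq_bigr do rewrite mulrBl.
    rewrite sumrB /pk; case: (k == ord0).
    + by rewrite hw2 -hqc subrr.
    + by rewrite hw3 -hqc subrr.
  move: hs0 hsk; rewrite !big_ord_recr /=.
  nra.
Qed.
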